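(* Let $R$ be a commutative ring with $2\in R^\times$. Define $\eta:GL(R)\to W'_E(R)$ by sending $G\in GL_{2n}(R)$ to the class of $G^t\psi_{2n}G$ and $G\in GL_{2n+1}(R)$ to the class of $(G\perp 1)^t\psi_{2n+2}(G\perp1)$. Then $\eta$ is well defined and induces a group homomorphism $\eta:K_1(R)\to W'_E(R)$.
   Context: $M\perp N$ denotes the block diagonal matrix $\begin{pmatrix}M&0\\0&N\end{pmatrix}$; $GL(R)=\bigcup_n GL_n(R)$ via $G\mapsto G\perp 1$, and $K_1(R)=GL(R)/E(R)$ with $E(R)$ the elementary subgroup. Let $\psi_2=\begin{pmatrix}0&1\\-1&0\end{pmatrix}$ and $\psi_{2r}=\psi_2\perp\psi_{2r-2}$. Let $S'_{2n}(R)$ be the set of invertible alternating $2n\times 2n$ matrices over $R$; for $m<n$, $S'_{2m}(R)\subset S'_{2n}(R)$ via $G\mapsto G\perp\psi_{2n-2m}$, and $S'(R)=\bigcup_n S'_{2n}(R)$. For $G\in S'_{2n}(R)$, $G'\in S'_{2m}(R)$, $G\sim G'$ iff there are $t\in\mathbb N$ and $E\in E_{2(m+n+t)}(R)$ with $G\perp\psi_{2(m+t)}=E^t(G'\perp\psi_{2(n+t)})E$. $W'_E(R):=S'(R)/\sim$ is an abelian group under $\perp$ with neutral element the class of $\psi_2$. *)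

(* Defs.v *)
From mathcomp Require Import all_boot all_order all_algebra.
Set Implicit Arguments. Unset Strict Implicit. Unset Printing Implicit Defensive.
Import GRing.Theory.
Local Open Scope ring_scope.

Section Defs.
Variable R : comUnitRingType.

Definition perp m n (M : 'M[R]_m) (N : 'M[R]_n) : 'M[R]_(m + n) :=
  block_mx M 0 0 N.

Definition psi2 : 'M[R]_2 := \matrix_(i < 2, j < 2)
  (if (val i == 0%N) && (val j == 1%N) then 1
   else if (val i == 1%N) && (val j == 0%N) then -1 else 0).

(* psi_{2r} = psi_2 _|_ psi_{2r-2}  (psi_0 is the empty matrix) *)
Fixpoint psi (r : nat) : 'M[R]_(r.*2) :=
  match r with
  | 0%N => 0
  | r'.+1 => perp psi2 (psi r')
  end.

(* elementary subgroup E_k(R): generated by the elementary matrices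
   1 + a e_ij (i <> j); since (1 + a e_ij)^-1 = 1 - a e_ij, the submonoid
   they generate is the subgroup. *)
Inductive elementary (k : nat) : 'M[R]_k -> Prop :=
  | elem_one : elementary 1%:M
  | elem_mul (M : 'M[R]_k) (i j : 'I_k) (a : R) :
      i != j -> elementary M -> elementary (M *m (1%:M + a *: delta_mx i j)).

(* an element of S'(R) presented at some size 2n *)
Definition altrep := {n : nat & 'M[R]_(n.*2)}.

Definition alternating k (A : 'M[R]_k) : Prop :=
  A^T = - A /\ forall i, A i i = 0.

Definition inS' (x : altrep) : Prop :=
  alternating (tagged x) /\ tagged x \in unitmx.

Lemma sim_eq1 n m t : (n.*2 + (m + t).*2 = (m + n + t).*2)%N.
Proof. by rewrite -doubleD addnA (addnC n m). Qed.
Lemma sim_eq2 n m t : (m.*2 + (n + t).*2 = (m + n + t).*2)%N.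
Proof. by rewrite -doubleD addnA. Qed.

Definition simW (x y : altrep) : Prop :=
  let n := tag x in let m := tag y in
  exists (t : nat) (E : 'M[R]_((m + n + t).*2)),
    elementary E /\
    castmx (sim_eq1 n m t, sim_eq1 n m t) (perp (tagged x) (psi (m + t)))
    = E^T *m castmx (sim_eq2 n m t, sim_eq2 n m t) (perp (tagged y) (psi (n + t))) *m E.

(* the group law of W'_E(R) on representatives: orthogonal sum *)
Definition osum (x y : altrep) : altrep :=
  existT _ (tag x + tag y)%N
    (castmx (esym (doubleD _ _), esym (doubleD _ _)) (perp (tagged x) (tagged y))).

(* the neutral element: the class of psi_2 *)
Definition psi2rep : altrep := existT _ 1%N psi2.

(* For G : 'M_k, padI G N is the N x N matrix with G in the upper left block and
   the identity elsewhere: padI G k = G, padI G k.+1 = G _|_ 1. *)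
Definition padI k (G : 'M[R]_k) (N : nat) : 'M[R]_N :=
  \matrix_(i < N, j < N)
    match (insub (val i) : option 'I_k), (insub (val j) : option 'I_k) with
    | Some i', Some j' => G i' j'
    | _, _ => ((val i == val j)%:R : R)
    end.

(* eta(G) = G^t psi_{2n} G for G in GL_{2n}, (G _|_ 1)^t psi_{2n+2} (G _|_ 1)
   for G in GL_{2n+1}; uphalf k = ceil(k/2). *)
Definition eta k (G : 'M[R]_k) : altrep :=
  let r := uphalf k in
  let Gh := padI G r.*2 in
  existT _ r (Gh^T *m psi r *m Gh).

End Defs.

(* Main.v *)
Require Import Defs.
From mathcomp Require Import all_boot all_order all_algebra zify.
Set Implicit Arguments. Unset Strict Implicit. Unset Printing Implicit Defensive.
Import GRing.Theory.
Local Open Scope ring_scope.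

Section Aux.
Variable R : comUnitRingType.
Implicit Types (p q : nat).

Lemma castmx_mulmx p q (e : p = q) (A B : 'M[R]_p) :
  castmx (e,e) (A *m B) = castmx (e,e) A *m castmx (e,e) B.
Proof. by case: q / e; rewrite !castmx_id. Qed.

Lemma castmx_trmx p q (e : p = q) (A : 'M[R]_p) :
  castmx (e,e) A^T = (castmx (e,e) A)^T.
Proof. by case: q / e; rewrite !castmx_id. Qed.

Lemma castmx1 p q (e : p = q) : castmx (e,e) (1%:M : 'M[R]_p) = 1%:M.
Proof. by case: q / e; rewrite !castmx_id. Qed.

Lemma castmx_irr p q (e e' : p = q) (A : 'M[R]_p) :
  castmx (e,e) A = castmx (e',e') A.
Proof. by rewrite (eq_irrelevance e e'). Qed.

Lemma elementary_cast p q (e : p = q) (A : 'M[R]_p) :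
  elementary A -> elementary (castmx (e,e) A).
Proof. by case: q / e; rewrite castmx_id. Qed.

Lemma elem_mulmx p (A B : 'M[R]_p) :
  elementary A -> elementary B -> elementary (A *m B).
Proof.
move=> hA; elim=> [|M i j a hij hM IH]; first by rewrite mulmx1.
by rewrite mulmxA; apply: elem_mul.
Qed.

Lemma perp_cast p p' s N (e1 : p = p') (e2 : p' + s = N) (e3 : p + s = N)
  (A : 'M[R]_p) (B : 'M[R]_s) :
  castmx (e2,e2) (perp (castmx (e1,e1) A) B) = castmx (e3,e3) (perp A B).
Proof. by case: p' / e1 in e2 *; rewrite castmx_id (eq_irrelevance e2 e3). Qed.

Lemma perp_castr m p q (e : p = q) (e' : m + p = m + q) (A : 'M[R]_m) (B : 'M[R]_p) :
  castmx (e',e') (perp A B) = perp A (castmx (e,e) B).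
Proof. by case: q / e in e' *; rewrite !castmx_id. Qed.

Lemma perp_mul m n (A C : 'M[R]_m) (B D : 'M[R]_n) :
  perp A B *m perp C D = perp (A *m C) (B *m D).
Proof. by rewrite /perp mulmx_block !mulmx0 !mul0mx !addr0 !add0r. Qed.

Lemma perp_tr m n (A : 'M[R]_m) (B : 'M[R]_n) : (perp A B)^T = perp A^T B^T.
Proof. by rewrite /perp tr_block_mx !trmx0. Qed.

Lemma perp1 m n : perp (1%:M : 'M[R]_m) (1%:M : 'M[R]_n) = 1%:M.
Proof. by rewrite /perp -scalar_mx_block. Qed.

Lemma perpN m n (A : 'M[R]_m) (B : 'M[R]_n) : perp (- A) (- B) = - perp A B.
Proof. by rewrite /perp opp_block_mx !oppr0. Qed.

Lemma perpE m n (A : 'M[R]_m) (B : 'M[R]_n) i j :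
  perp A B i j = match split i, split j with
                 | inl i1, inl j1 => A i1 j1
                 | inr i2, inr j2 => B i2 j2
                 | _, _ => 0 end.
Proof. by rewrite /perp /block_mx !mxE; case: split => ?; rewrite ?mxE; case: split => ?; rewrite ?mxE. Qed.

Lemma blockE m n (A : 'M[R]_m) (B : 'M[R]_(m,n)) (C : 'M[R]_(n,m)) (D : 'M[R]_n) i j :
  block_mx A B C D i j = match split i, split j with
                 | inl i1, inl j1 => A i1 j1
                 | inl i1, inr j2 => B i1 j2
                 | inr i2, inl j1 => C i2 j1
                 | inr i2, inr j2 => D i2 j2 end.
Proof. by rewrite /block_mx !mxE; case: split => ?; rewrite ?mxE; case: split => ?; rewrite ?mxE. Qed.

Lemma psiS r : psi R r.+1 = perp (psi2 R) (psi R r). Proof. by []. Qed.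

Lemma psi2_tr : (psi2 R)^T = - psi2 R.
Proof.
apply/matrixP=> i j; rewrite !mxE.
by case: i => [[|[|i]] Hi] //; case: j => [[|[|j]] Hj] //=; rewrite ?oppr0 ?opprK.
Qed.

Lemma psi2_sq : psi2 R *m psi2 R = - 1%:M.
Proof.
apply/matrixP=> i j; rewrite !mxE !big_ord_recl big_ord0 !mxE.
case: i => [[|[|i]] Hi] //; case: j => [[|[|j]] Hj] //=;
  rewrite ?mulr0 ?mul0r ?addr0 ?add0r ?mulr1 ?mul1r ?mulrN ?mulNr ?opprK ?oppr0 //.
Qed.

Lemma psi_tr r : (psi R r)^T = - psi R r.
Proof.
elim: r => [|r IH]; first by apply/matrixP=> [[]].
have := perp_tr (psi2 R) (psi R r); rewrite psi2_tr IH perpN; exact.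
Qed.

Lemma psi_sq r : psi R r *m psi R r = - 1%:M.
Proof.
elim: r => [|r IH]; first by apply/matrixP=> [[]].
have := perp_mul (psi2 R) (psi2 R) (psi R r) (psi R r); rewrite psi2_sq IH perpN perp1; exact.
Qed.

Lemma psi_unit r : psi R r \in unitmx.
Proof.
have h : psi R r *m (- psi R r) = 1%:M by rewrite mulmxN psi_sq opprK.
by case: (mulmx1_unit h).
Qed.

Lemma psi_perp a b c (e : a.*2 + b.*2 = c.*2) :
  castmx (e,e) (perp (psi R a) (psi R b)) = psi R c.
Proof.
elim: a b c e => [|a IH] b c e.
  have hc : c = b by apply/double_inj; rewrite -e.
  subst c.
  apply/matrixP=> i j; rewrite castmxE perpE.
  case: splitP => [[]//|i2 Hi]; case: splitP => [[]//|j2 Hj].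
  by congr (psi R b _ _); apply: val_inj; rewrite /= ?Hi ?Hj.
case: c e => [|c] e; first by exfalso; move: e; lia.
have e1 : (a.*2 + b.*2 = c.*2)%N by move: e; lia.
change (psi R c.+1) with (perp (psi2 R) (psi R c)).
change (psi R a.+1) with (perp (psi2 R) (psi R a)).
rewrite -(IH b c e1).
have e2 : (2 + (a.*2 + b.*2) = 2 + c.*2)%N by rewrite e1.
rewrite -(perp_castr e1 e2).
have hA := block_mxAx (psi2 R) 0 0 0 (psi R a) 0 0 0 (psi R b).
rewrite /= !col_mx0 !row_mx0 in hA.
rewrite /perp hA castmx_comp.
exact: castmx_irr.
Qed.

Lemma padI_perp k (G : 'M[R]_k) M q N (hk : (k <= M)%N) (e : (M + q = N)%N) :
  castmx (e,e) (perp (padI G M) 1%:M) = padI G N.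
Proof.
apply/matrixP=> i j; rewrite castmxE perpE [RHS]mxE.
case: splitP => [i1 /= Hi|i2 /= Hi]; case: splitP => [j1 /= Hj|j2 /= Hj];
  rewrite ?mxE Hi Hj //.
- have -> : insub (M + j2)%N = None :> option 'I_k by apply: insubF; apply/negbTE; rewrite -leqNgt; lia.
  have /negPf -> : (i1 != M + j2 :> nat)%N by have := ltn_ord i1; lia.
  by case: insub.
- have -> : insub (M + i2)%N = None :> option 'I_k by apply: insubF; apply/negbTE; rewrite -leqNgt; lia.
  by have /negPf -> : (M + i2 != j1 :> nat)%N by have := ltn_ord j1; lia.
- have -> : insub (M + i2)%N = None :> option 'I_k by apply: insubF; apply/negbTE; rewrite -leqNgt; lia.
  by rewrite eqn_add2l.
Qed.

Lemma padI_id k (G : 'M[R]_k) : padI G k = G.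
Proof. by apply/matrixP=> i j; rewrite mxE !valK. Qed.

Lemma padI_perp' k (G : 'M[R]_k) M q (hk : (k <= M)%N) :
  padI G (M + q) = perp (padI G M) 1%:M.
Proof. by rewrite -(padI_perp G hk (erefl (M + q)%N)) castmx_id. Qed.

Lemma padI_mul k (A B : 'M[R]_k) N (hk : (k <= N)%N) :
  padI (A *m B) N = padI A N *m padI B N.
Proof.
have e : (k + (N - k) = N)%N by lia.
by rewrite -!(padI_perp _ (leqnn k) e) !padI_id -castmx_mulmx perp_mul mulmx1.
Qed.

Lemma padI1 k N (hk : (k <= N)%N) : padI (1%:M : 'M[R]_k) N = 1%:M.
Proof.
have e : (k + (N - k) = N)%N by lia.
by rewrite -!(padI_perp _ (leqnn k) e) !padI_id perp1 castmx1.
Qed.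

Lemma padI_unit k (G : 'M[R]_k) N (hk : (k <= N)%N) :
  G \in unitmx -> padI G N \in unitmx.
Proof.
move=> hG; have h : padI G N *m padI (invmx G) N = 1%:M.
  by rewrite -padI_mul // mulmxV // padI1.
by case: (mulmx1_unit h).
Qed.

Lemma padI_perpG k (G : 'M[R]_k) N (hk : (k + 1 <= N)%N) :
  padI (perp G (1%:M : 'M[R]_1)) N = padI G N.
Proof.
have e : ((k + 1) + (N - (k + 1)) = N)%N by lia.
rewrite -(padI_perp (perp G 1%:M) (leqnn _) e) -(padI_perp G (leq_addr 1 k) e).
by rewrite padI_id padI_perp' // padI_id.
Qed.

Lemma perp_elem m q (i j : 'I_m) (a : R) :
  perp (1%:M + a *: delta_mx i j) (1%:M : 'M[R]_q) =
  1%:M + a *: delta_mx (lshift q i) (lshift q j).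
Proof.
apply/matrixP=> x y; rewrite perpE !mxE.
case: splitP => [x1 /= Hx|x2 /= Hx]; case: splitP => [y1 /= Hy|y2 /= Hy];
  rewrite ?mxE -!val_eqE /= Hx Hy.
- by [].
- have /negPf -> : (x1 != m + y2 :> nat)%N by have := ltn_ord x1; lia.
  have /negPf -> : (m + y2 != j :> nat)%N by have := ltn_ord j; lia.
  by rewrite andbF mulr0 addr0.
- have /negPf -> : (m + x2 != y1 :> nat)%N by have := ltn_ord y1; lia.
  have /negPf -> : (m + x2 != i :> nat)%N by have := ltn_ord i; lia.
  by rewrite mulr0 addr0.
- have /negPf -> : (m + x2 != i :> nat)%N by have := ltn_ord i; lia.
  by rewrite eqn_add2l mulr0 addr0.
Qed.

Lemma elementary_perp1 m q (A : 'M[R]_m) :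
  elementary A -> elementary (perp A (1%:M : 'M[R]_q)).
Proof.
elim=> [|M i j a hij hM IH]; first by rewrite perp1; apply: elem_one.
have -> : perp (M *m (1%:M + a *: delta_mx i j)) (1%:M : 'M[R]_q) =
          perp M 1%:M *m perp (1%:M + a *: delta_mx i j) 1%:M by rewrite perp_mul mulmx1.
by rewrite perp_elem; apply: elem_mul => //; rewrite -val_eqE.
Qed.

Lemma elementary_padI k (G : 'M[R]_k) N (hk : (k <= N)%N) :
  elementary G -> elementary (padI G N).
Proof.
move=> hG; have e : (k + (N - k) = N)%N by lia.
rewrite -(padI_perp _ (leqnn k) e) padI_id.
by apply: elementary_cast; apply: elementary_perp1.
Qed.

Lemma elem_supp N (p : pred 'I_N) (X : 'M[R]_N) :
  (forall i j, ~~ (p i && ~~ p j) -> X i j = 0) -> elementary (1%:M + X).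
Proof.
move=> hX.
have key : forall s : seq ('I_N * 'I_N),
    elementary (1%:M + \sum_(q <- s) X q.1 q.2 *: delta_mx q.1 q.2).
  elim=> [|q s IH]; first by rewrite big_nil addr0; apply: elem_one.
  rewrite big_cons.
  case hq: (p q.1 && ~~ p q.2); last by rewrite hX ?hq // scale0r add0r.
  set S := \sum_(_ <- _) _ in IH *.
  set T := X q.1 q.2 *: delta_mx q.1 q.2.
  have -> : 1%:M + (T + S) = (1%:M + S) *m (1%:M + T).
    rewrite mulmxDr mulmx1 mulmxDl mul1mx.
    have -> : S *m T = 0.
      rewrite /S mulmx_suml big1 // => q' _.
      rewrite /T -scalemxAl -scalemxAr mul_delta_mx_cond.
      case: eqP => [e|]; last by rewrite mulr0n !scaler0.
      rewrite hX ?scale0r // e; move/andP: hq => [-> _]; by rewrite andbF.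
    by rewrite addr0 [T + S]addrC addrA.
  apply: elem_mul => //.
  by apply/eqP => e; rewrite e andbN in hq.
rewrite {1}(matrix_sum_delta X) pair_big /=.
exact: key.
Qed.

Lemma elem_U a (X : 'M[R]_a) : elementary (block_mx 1%:M X 0 1%:M).
Proof.
have -> : block_mx 1%:M X 0 1%:M = 1%:M + block_mx 0 X 0 0.
  by rewrite (scalar_mx_block a a) add_block_mx !addr0 !add0r.
apply: (@elem_supp _ (fun i : 'I_(a + a) => (i < a)%N)) => i j h.
rewrite blockE; case: splitP => [i1 /= Hi|i2 /= Hi]; case: splitP => [j1 /= Hj|j2 /= Hj];
  rewrite ?mxE //.
exfalso; move: h; rewrite Hi Hj ltn_ord /= -leqNgt leq_addr.
by [].
Qed.

Lemma elem_L a (Y : 'M[R]_a) : elementary (block_mx 1%:M 0 Y 1%:M).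
Proof.
have -> : block_mx 1%:M 0 Y 1%:M = 1%:M + block_mx 0 0 Y 0.
  by rewrite (scalar_mx_block a a) add_block_mx !addr0 !add0r.
apply: (@elem_supp _ (fun i : 'I_(a + a) => (a <= i)%N)) => i j h.
rewrite blockE; case: splitP => [i1 /= Hi|i2 /= Hi]; case: splitP => [j1 /= Hj|j2 /= Hj];
  rewrite ?mxE //.
exfalso; move: h; rewrite Hi Hj leq_addr /= -ltnNge ltn_ord.
by [].
Qed.

Lemma whitehead a (H : 'M[R]_a) : H \in unitmx ->
  elementary (perp H (invmx H)).
Proof.
move=> hH.
have -> : perp H (invmx H) =
  block_mx 1%:M H 0 1%:M *m block_mx 1%:M 0 (- invmx H) 1%:M *m block_mx 1%:M H 0 1%:M
  *m (block_mx 1%:M (- 1%:M) 0 1%:M *m block_mx 1%:M 0 1%:M 1%:M *m block_mx 1%:M (- 1%:M) 0 1%:M).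
  rewrite !mulmx_block !(mul1mx, mulmx1, mul0mx, mulmx0, addr0, add0r, mulmxN, mulNmx).
  rewrite mulmxV // mulVmx // !(subrr, addNr, addrN, add0r, addr0, mul0mx, mulmx0, mul1mx, mulmx1, mulmxN, mulNmx, opprK, oppr0).
  by [].
repeat apply: elem_mulmx; (apply: elem_U || apply: elem_L).
Qed.

Lemma perp_congr n b c (e : (n.*2 + b.*2 = c.*2)%N) (P : 'M[R]_(n.*2)) :
  castmx (e,e) (perp (P^T *m psi R n *m P) (psi R b)) =
  (castmx (e,e) (perp P 1%:M))^T *m psi R c *m castmx (e,e) (perp P 1%:M).
Proof.
by rewrite -(psi_perp e) -castmx_trmx -!castmx_mulmx perp_tr trmx1 !perp_mul mulmx1 mul1mx.
Qed.

Lemma simW_suff n m (P : 'M[R]_(n.*2)) (Q : 'M[R]_(m.*2)) t (E : 'M[R]_((m+n+t).*2)) :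
  elementary E ->
  castmx (sim_eq1 n m t, sim_eq1 n m t) (perp P 1%:M) =
    castmx (sim_eq2 n m t, sim_eq2 n m t) (perp Q 1%:M) *m E ->
  simW (existT _ n (P^T *m psi R n *m P)) (existT _ m (Q^T *m psi R m *m Q)).
Proof.
move=> hE hPQ; exists t, E; split => //=.
by rewrite !perp_congr hPQ !trmx_mul !mulmxA.
Qed.

Lemma le_uphalf k : (k <= (uphalf k).*2)%N.
Proof.
rewrite uphalf_half -{1}(odd_double_half k) doubleD leq_add2r.
by case: odd.
Qed.

Lemma psi1 : (perp (psi2 R) (psi R 0) : 'M_(2 + 0)) = psi2 R.
Proof.
apply/matrixP=> i j; rewrite perpE.
case: splitP => [i1 /= Hi|[]//]; case: splitP => [j1 /= Hj|[]//].
by congr (psi2 R _ _); apply: val_inj.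
Qed.

End Aux.

Theorem lemma2p4 (R : comUnitRingType) (h2 : (2%:R : R) \is a GRing.unit) :
  (* eta takes values in S'(R) *)
  (forall k (G : 'M[R]_k), G \in unitmx -> inS' (eta G)) /\
  (* well defined on GL(R) = union of GL_k(R) via G |-> G _|_ 1 *)
  (forall k (G : 'M[R]_k), G \in unitmx ->
     simW (eta (perp G (1%:M : 'M[R]_1))) (eta G)) /\
  (* homomorphism GL(R) -> W'_E(R) *)
  (forall k (G H : 'M[R]_k), G \in unitmx -> H \in unitmx ->
     simW (eta (G *m H)) (osum (eta G) (eta H))) /\
  (* E(R) lies in the kernel, so eta factors through K_1(R) *)
  (forall k (E : 'M[R]_k), elementary E -> simW (eta E) (psi2rep R)).
Proof.
split.
  move=> k G hG; rewrite /inS' /eta /=.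
  set r := uphalf k; set P := padI G r.*2.
  set M := P^T *m psi R r *m P.
  have hT : M^T = - M by rewrite /M !trmx_mul trmxK psi_tr mulNmx mulmxN mulmxA.
  split; first split; [exact: hT| move=> i|].
    have := congr1 (fun A : 'M[R]_(r.*2) => A i i) hT; rewrite /= !mxE => h.
    by apply: (mulrI h2); rewrite mulr0 mulr_natl mulr2n {2}h addrN.
  by rewrite /M !unitmx_mul unitmx_tr psi_unit padI_unit // le_uphalf.
split.
  move=> k G _; rewrite /eta.
  apply: (@simW_suff _ _ _ _ _ 0 1%:M); first exact: elem_one.
  rewrite !padI_perp ?le_uphalf // ?padI_perpG ?mulmx1 //.
  by have := le_uphalf k; have := le_uphalf (k + 1); lia.
split.
  move=> k G H hG hH.
  set r := uphalf k.
  have hk := le_uphalf k.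
  set PG := padI G r.*2; set PH := padI H r.*2.
  set e0 := esym (doubleD r r).
  set Q := castmx (e0, e0) (perp PG PH).
  have hos : osum (eta G) (eta H) = existT _ (r + r)%N (Q^T *m psi R (r + r) *m Q).
    rewrite /osum /eta /=; congr existT.
    by rewrite -(psi_perp R e0) -castmx_trmx -!castmx_mulmx perp_tr !perp_mul.
  rewrite hos /eta.
  have eN : ((r.*2 + r.*2) + (r + 0).*2 = (r + r + r + 0).*2)%N by lia.
  have hPH : PH \in unitmx by apply: padI_unit.
  apply: (@simW_suff _ _ _ _ _ 0 (castmx (eN,eN) (perp (perp PH (invmx PH)) 1%:M))).
    by apply: elementary_cast; apply: elementary_perp1; apply: whitehead.
  have hGN : forall X : 'M[R]_k, padI X (r + r + r + 0).*2 =
      castmx (eN,eN) (perp (perp (padI X r.*2) 1%:M) 1%:M).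
    move=> X; rewrite -padI_perp' // (padI_perp X _ eN) //; lia.
  rewrite padI_perp // padI_mul; last by lia.
  rewrite !hGN (perp_cast _ _ eN) -!castmx_mulmx !perp_mul mulmxV //.
  by rewrite !mulmx1.
move=> k E0 hE.
have hpsi : psi2rep R = existT _ 1%N (1%:M^T *m psi R 1 *m 1%:M).
  rewrite /psi2rep; congr existT; rewrite trmx1 mul1mx mulmx1.
  by symmetry; exact: psi1.
rewrite hpsi /eta.
have hk := le_uphalf k.
apply: (@simW_suff _ _ _ _ _ 0 (padI E0 (1 + uphalf k + 0).*2)).
  by apply: elementary_padI => //; lia.
by rewrite padI_perp // perp1 castmx1 mul1mx.
Qed.
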